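(* Let $G$ be a combinatorial 4-PPT of the interior of a simple cycle $C$ with $b$ vertices, of which $c$ have their reflex angle inside the cycle. Then the number $t$ of triangular faces of $G$ is $t=b-2c-2$.
   Context: An angle is a vertex–face incidence of a plane embedded graph. A combinatorial 4-PPT of the interior of a simple cycle $C$ means: a plane simple graph $G$ whose outer face is bounded by the simple cycle $C$, all of whose interior faces have size 3 or 4, with a tag ''reflex'' or ''convex'' on each interior angle such that every interior face has exactly three convex angles, every vertex not on $C$ is incident to exactly one reflex angle, and every vertex of $C$ is incident to at most one reflex angle (a vertex of $C$ ''has its reflex angle inside the cycle'' if it has a reflex-tagged angle in an interior face; the other vertices of $C$ have their reflex angle outside). For instance, $C$ together with everything inside it in a combinatorial 4-PPT (a combinatorial pointed pseudo-triangulation with interior faces of size 3 or 4) is such a structure. *)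

(* Defs.v *)
(* A plane graph is represented combinatorially by a
   hypermap (rotation system) in the style of Gonthier's four-colour
   development: a finite set of darts with permutations edge/node/face
   satisfying node (face (edge x)) = x.  Vertices = node-orbits,
   edges = edge-orbits, faces = face-orbits, and each dart is an angle
   (a vertex-face incidence). *)
From mathcomp Require Import all_boot all_algebra.
Set Implicit Arguments. Unset Strict Implicit. Unset Printing Implicit Defensive.

Section PlaneMap.
Variables (D : finType) (edge node face : D -> D).

Definition hypermap_ax := forall x, node (face (edge x)) = x.

Definition glink : rel D :=
  [rel x y | [|| edge x == y, node x == y | face x == y]].
Definition map_connected := forall x y, connect glink x y.

(* genus 0 (Euler formula V + F + E = #darts + 2, i.e. V - E + F = 2
   for a plain map where #darts = 2E): the map is embedded in the sphere *)
Definition genus0 :=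
  fcard node (predT : pred D) + fcard face (predT : pred D)
    + fcard edge (predT : pred D) = #|D| + 2.

Definition plain := forall x, edge (edge x) = x /\ edge x != x.

Definition loopless := forall x, ~~ fconnect node x (edge x).
Definition no_multi_edges := forall x y,
  fconnect node x y -> fconnect node (edge x) (edge y) -> x = y.

Definition plane_simple_graph :=
  [/\ hypermap_ax, map_connected, genus0, plain &
      (loopless /\ no_multi_edges)].

Variable o : D.

Definition outer (x : D) := fconnect face o x.
Definition interior (x : D) := ~~ outer x.

(* the outer face is bounded by a simple cycle *)
Definition outer_simple_cycle :=
  3 <= order face o /\
  (forall x y, outer x -> outer y -> fconnect node x y -> x = y).

Definition on_C (x : D) := [exists y, outer y && fconnect node x y].

(* combinatorial 4-PPT of the interior of C, with reflex tags r on angles *)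
Definition comb_4PPT_interior (r : pred D) :=
  [/\ plane_simple_graph /\ outer_simple_cycle,
      (forall x, interior x -> order face x \in [:: 3; 4]),
      (forall x, interior x -> #|[pred y | fconnect face x y && ~~ r y]| = 3),
      (forall x, ~~ on_C x ->
         #|[pred y | fconnect node x y && interior y && r y]| = 1) &
      (forall x, on_C x ->
         #|[pred y | fconnect node x y && interior y && r y]| <= 1)].

Definition nb_C := order face o.

(* c = number of vertices of C with their reflex angle inside C
   (outer darts are at pairwise distinct vertices) *)
Definition nb_reflex_inside (r : pred D) :=
  #|[pred x | outer x &&
       [exists y, fconnect node x y && interior y && r y]]|.

Definition nb_triangles :=
  fcard face [pred x | interior x && (order face x == 3)].

End PlaneMap.

(* Main.v *)
Require Import Defs.
From mathcomp Require Import all_boot all_algebra.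
From mathcomp Require Import zify.
From Stdlib Require Import Lia.
Set Implicit Arguments. Unset Strict Implicit.

Section Orb.
Variables (T : finType) (f : T -> T).
Hypothesis finj : injective f.

Lemma sum_orbits (a : {pred T}) (w : T -> nat) : fclosed f a ->
  \sum_(y in a) w y = \sum_(x | froots f x && (x \in a)) \sum_(y | fconnect f x y) w y.
Proof.
move=> ca.
have sym : connect_sym (frel f) by move=> x y; exact: fconnect_sym.
rewrite (partition_big (froot f) (fun x => froots f x && (x \in a))); last first.
  move=> i ai; rewrite (roots_root sym) /=; have E := closed_connect ca (connect_root (frel f) i); by rewrite ai in E; rewrite -E.
apply: eq_bigr => x /andP[rx ax]; apply: eq_bigl => y; have rx1 : froot f x = x := eqP rx.
rewrite -{1}rx1; have E : (froot f y == froot f x) = fconnect f x y by exact: (etrans (root_connect sym y x) (sym y x)).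
rewrite E; apply/idP/idP => [/andP[]//|c]; rewrite c andbT.
have E2 := closed_connect ca c; rewrite ax in E2; by rewrite -E2.
Qed.

Lemma fcard_sum (a : {pred T}) :
  fcard f a = \sum_(x | froots f x && (x \in a)) 1.
Proof. by rewrite sum1_card. Qed.

Lemma sum_orbits_const (a : {pred T}) (w : T -> nat) k : fclosed f a ->
  (forall x, x \in a -> \sum_(y | fconnect f x y) w y = k) ->
  \sum_(y in a) w y = k * fcard f a.
Proof.
move=> ca H; rewrite sum_orbits // fcard_sum big_distrr /= muln1.
by apply: eq_bigr => x /andP[_ ax]; rewrite H.
Qed.

Lemma card_sum (P : pred T) : #|P| = \sum_(y : T) P y.
Proof. rewrite -sum1_card big_mkcond /=; apply: eq_bigr => y _; by rewrite unfold_in; case: (P y). Qed.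

Lemma card_sum_in (a : {pred T}) (P : pred T) : #|[pred y | (y \in a) && P y]| = \sum_(y in a) P y.
Proof. rewrite card_sum [RHS]big_mkcond /=; apply: eq_bigr => y _; by case: (y \in a). Qed.
Lemma sum_cond_card (P Q : pred T) : \sum_(y | P y) Q y = #|[pred y | P y && Q y]|.
Proof. rewrite card_sum [LHS]big_mkcond /=; apply: eq_bigr => y _; by case: (P y). Qed.

Lemma sum1_cond (P : pred T) : \sum_(y | P y) 1 = #|P|.
Proof. rewrite card_sum [LHS]big_mkcond /=; apply: eq_bigr => y _; by case: (P y). Qed.

Lemma sum_in_all (a : {pred T}) (w : T -> nat) : (forall y, y \notin a -> w y = 0) ->
  \sum_(y in a) w y = \sum_y w y.
Proof.
move=> H; rewrite [RHS](bigID (fun y => y \in a)) /= [X in _ + X]big1 ?addn0 //.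
Qed.
End Orb.

Section Main.
Variables (D : finType) (edge node face : D -> D) (o : D) (r : pred D).
Hypothesis H : comb_4PPT_interior edge node face o r.

Lemma injs : [/\ injective edge, injective node & injective face].
Proof.
case: H => [[[Hax _ _ _ _] _] _ _ _ _].
have ie : injective edge by move=> x y E; rewrite -(Hax x) -(Hax y) E.
have ig : injective (face \o edge) by move=> x y /= E; rewrite -(Hax x) -(Hax y) E.
have [h gh hg] := injF_bij ig.
have nh : node =1 h by move=> x; rewrite -{1}(hg x) /= Hax.
have in_ : injective node by move=> x y E; rewrite -(hg x) -(hg y) -!nh E.
split => // x y E.
have [ei ie1 ei1] := injF_bij ie.
by rewrite -(ei1 x) -(ei1 y); congr edge; apply: ig => /=; rewrite !ei1.
Qed.
Let outr : pred D := outer face o.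
Let I : pred D := [predC outr].
Let onC : pred D := on_C node face o.

Lemma cl_outer : fclosed face outr.
Proof. case: injs => _ _ fi. move=> x y /eqP <-. by rewrite /outr /outer !inE -(same_fconnect1_r fi). Qed.

Lemma cl_I : fclosed face I.
Proof. move=> x y E; have := cl_outer E; rewrite !inE /= => ->. by []. Qed.

Lemma cl_onC : fclosed node onC.
Proof.
case: injs => _ ni _. move=> x y /eqP <-; rewrite /onC /on_C !unfold_in /=.
apply/existsP/existsP => [] [z /andP[oz c]]; exists z; rewrite oz /=.
  by rewrite -(same_fconnect1 ni).
by rewrite (same_fconnect1 ni).
Qed.
Lemma per_face x : x \in I -> order face x = 3 + \sum_(y | fconnect face x y) r y.
Proof.
move=> xI; case: H => _ _ Hconv _ _.
rewrite /order -sum1_cond.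
rewrite (eq_bigr (fun y => r y + ~~ r y)) ?big_split /=; last by move=> y _; case: (r y).
rewrite addnC (sum_cond_card (fconnect face x) (fun y => ~~ r y)); congr (_ + _).
exact: Hconv.
Qed.

Lemma face_eq1 : \sum_(y in I) 1 = 3 * fcard face I + \sum_(y in I) r y.
Proof.
case: injs => _ _ fi.
rewrite !(sum_orbits fi _ cl_I) fcard_sum big_distrr /= -big_split /=.
apply: eq_bigr => x /andP[_ xI]; by rewrite sum1_cond -per_face // muln1.
Qed.

Lemma face_eq2 : nb_triangles face o + \sum_(y in I) r y = fcard face I.
Proof.
case: injs => _ _ fi; case: H => _ Hsz _ _ _.
rewrite !(sum_orbits fi _ cl_I) !fcard_sum. rewrite /nb_triangles fcard_sum.
rewrite (_ : \sum_(x | froots face x && (x \in [pred x | interior face o x && (order face x == 3)])) 1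
   = \sum_(x | froots face x && (x \in I)) (order face x == 3)); last first.
  rewrite big_mkcond [RHS]big_mkcond /=; apply: eq_bigr => x _.
  rewrite !unfold_in /= /interior /outer; by case: (froots face x); case: (fconnect face o x); case: (order face x == 3).
rewrite -big_split /=; apply: eq_bigr => x /andP[_ xI].
have := per_face xI; have := Hsz x xI; rewrite !inE.
by case/orP => /eqP ->; case: (\sum_(y | fconnect face x y) r y) => [|[|n]].
Qed.
Lemma card_outr : #|outr| = nb_C face o.
Proof. by rewrite /nb_C /order; apply: eq_card. Qed.

Lemma FO : fcard face outr = 1.
Proof.
case: injs => _ _ fi; case: H => [[_ [Hb _]] _ _ _ _].
have cl := cl_outer.
have E := @sum_orbits_const _ _ fi outr (fun _ => 1) (nb_C face o) cl.
rewrite sum1_card card_outr in E.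
have E' : nb_C face o = nb_C face o * fcard face outr.
  apply: E => x xo; rewrite sum1_cond /nb_C /order; apply: eq_card => z.
  rewrite !unfold_in /=; apply/idP/idP => c.
    exact: connect_trans xo c.
  by apply: connect_trans c; rewrite (fconnect_sym fi).
move: Hb E'; rewrite /nb_C; case: (fcard face outr) => [|[|n]] //; nia.
Qed.
Lemma onC_out y : outr y -> y \in onC.
Proof. move=> oy; rewrite unfold_in /onC /on_C; apply/existsP; exists y; rewrite connect0 andbT; exact: oy. Qed.

Lemma outer_sum x : x \in onC -> \sum_(y | fconnect node x y) outr y = 1.
Proof.
case: injs => _ ni _; case: H => [[_ [_ Hs]] _ _ _ _].
rewrite unfold_in /onC /on_C => /existsP [y0 /andP[oy0 c0]].
rewrite (bigD1 y0) //= (_ : outr y0 = true) // big1 // => y /andP[cy ny]; case oy: (outr y) => //.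
case/eqP: ny; apply: Hs => //.
by apply: connect_trans c0; rewrite (fconnect_sym ni).
Qed.

Lemma b_eq : nb_C face o = fcard node onC.
Proof.
case: injs => _ ni _.
have := @sum_orbits_const _ _ ni onC (fun y => outr y) 1 cl_onC outer_sum.
rewrite mul1n => <-; rewrite sum_in_all; first by rewrite -card_sum card_outr.
move=> y; apply: contraNeq; rewrite eqb0 negbK; exact: onC_out.
Qed.
Lemma cl_nonC : fclosed node [predC onC].
Proof. move=> x y E; have := cl_onC E; rewrite !inE /= => ->. by []. Qed.

Let w y := ~~ outr y && r y.
Let ex y := [exists z, fconnect node y z && interior face o z && r z].

Lemma Rin_split : \sum_(y in I) r y =
  \sum_(y in onC) w y + \sum_(y in [predC onC]) w y.
Proof.
transitivity (\sum_y w y).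
  rewrite big_mkcond /=; apply: eq_bigr => y _.
  rewrite /w !inE /=; by case: (outr y).
rewrite [LHS](bigID (fun y => y \in onC) predT) /=; congr (_ + _); apply: eq_bigl => y; by rewrite ?inE.
Qed.

Lemma nonC_part : \sum_(y in [predC onC]) w y = fcard node [predC onC].
Proof.
case: injs => _ ni _; case: H => _ _ _ Hr _.
rewrite -[RHS]mul1n; apply: (@sum_orbits_const _ _ ni [predC onC] w 1 cl_nonC) => x xn.
rewrite sum_cond_card -(Hr x); first by apply: eq_card => y; rewrite !inE /= /w andbA.
by move: xn; rewrite inE.
Qed.
Lemma ex_const x y : fconnect node x y -> ex y = ex x.
Proof.
case: injs => _ ni _ => cxy; rewrite /ex; apply/existsP/existsP => [] [z Hz]; exists z.
  by move: Hz; rewrite -!andbA => /andP[c ->]; rewrite (connect_trans cxy c).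
move: Hz; rewrite -!andbA => /andP[c ->]; rewrite andbT.
by apply: connect_trans c; rewrite (fconnect_sym ni).
Qed.

Lemma per_root x : x \in onC -> \sum_(y | fconnect node x y) w y = ex x.
Proof.
case: H => _ _ _ _ Hr => xC.
rewrite sum_cond_card.
have le1 : #|[pred y | fconnect node x y && w y]| <= 1.
  apply: (leq_trans _ (Hr x _)); last by move: xC; rewrite unfold_in.
  apply: subset_leq_card; apply/subsetP => y; rewrite !inE /= /w /interior andbA; exact: id.
case: (boolP (ex x)) => exx.
  have : 0 < #|[pred y | fconnect node x y && w y]|.
    apply/card_gt0P; case/existsP: exx => z; rewrite -andbA => /andP[c iz].
    by exists z; rewrite inE /= c /w.
  by move: le1; case: #|_| => [|[|]].
apply: eq_card0 => y; rewrite !inE /=; apply/negP => /andP[c wy].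
by case/negP: exx; apply/existsP; exists y; rewrite c.
Qed.
Lemma onC_part : \sum_(y in onC) w y = nb_reflex_inside node face o r.
Proof.
case: injs => _ ni _.
transitivity (\sum_(y in onC) (outr y && ex y)).
  rewrite !(sum_orbits ni _ cl_onC); apply: eq_bigr => x /andP[_ xC].
  rewrite per_root // [RHS](eq_bigr (fun y => nat_of_bool (outr y && ex x))); last first.
    by move=> y c; rewrite (ex_const c).
  case: (ex x) => /=.
    by rewrite -(outer_sum xC); apply: eq_bigr => y _; rewrite andbT.
  by rewrite big1 // => y _; rewrite andbF.
rewrite sum_in_all; last first.
  move=> y yn; case oy: (outr y) => //=; by rewrite (onC_out oy) in yn.
by rewrite /nb_reflex_inside card_sum.
Qed.

Lemma edge_count : #|D| = 2 * fcard edge (predT : pred D).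
Proof.
case: injs => ei _ _; case: H => [[[_ _ _ Hp _] _] _ _ _ _].
have cl : fclosed edge (predT : pred D) by [].
rewrite -(@sum_orbits_const _ _ ei predT (fun _ => 1) 2 cl); last first.
  move=> x _; rewrite sum1_cond -[RHS](_ : #|pred2 x (edge x)| = 2); last first.
    by rewrite card2 eq_sym (proj2 (Hp x)).
  apply: eq_card => y; rewrite !inE /=; apply/idP/idP.
    have cl2 : fclosed edge (pred2 x (edge x)).
      move=> u v /eqP <-; rewrite !inE.
      have eu := proj1 (Hp u); have ex2 := proj1 (Hp x).
      apply/idP/idP => /orP[] /eqP E.
      - by rewrite E eqxx orbT.
      - by rewrite E ex2 eqxx.
      - by rewrite -eu E eqxx orbT.
      - by rewrite (ei _ _ E) eqxx.
    move=> c; have := closed_connect cl2 c; rewrite !inE eqxx /= => <-. by [].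
  case/orP => /eqP ->; first exact: connect0.
  exact: fconnect1.
by rewrite sum1_card; apply: eq_card.
Qed.
Lemma V_split : fcard node (predT : pred D) = fcard node onC + fcard node [predC onC].
Proof. rewrite -n_compC; apply: eq_n_comp_r => y; by rewrite !inE. Qed.

Lemma F_split : fcard face (predT : pred D) = fcard face outr + fcard face I.
Proof. rewrite -n_compC; apply: eq_n_comp_r => y; by rewrite !inE. Qed.

Lemma D_split : #|D| = \sum_(y in I) 1 + nb_C face o.
Proof. by rewrite sum1_card -card_outr addnC cardC. Qed.

Lemma main_nat : (nb_triangles face o + 2 * nb_reflex_inside node face o r + 2 = nb_C face o)%N.
Proof.
case: H => [[[_ _ Hg _ _] _] _ _ _ _].
have E1 := face_eq1; have E2 := face_eq2; have E3 := Rin_split; have E4 := nonC_part; have E5 := onC_part.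
have E6 := b_eq; have E7 := D_split; have E8 := edge_count.
move: Hg; rewrite /genus0 V_split F_split FO.
lia.
Qed.
End Main.

Local Open Scope ring_scope.

Theorem corollary1 (D : finType) (edge node face : D -> D) (o : D) (r : pred D) :
  comb_4PPT_interior edge node face o r ->
  (nb_triangles face o)%:Z =
    (nb_C face o)%:Z - 2 * (nb_reflex_inside node face o r)%:Z - 2.
Proof.
move=> H; have := main_nat H; lia.
Qed.
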